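(* For each positive integer $n$, let $\Gamma_n$ be the set of non-negative integers that can be expressed as a finite sum of squares of integers greater than or equal to $n$ (the empty sum being $0$), and let $F(\Gamma_n)$ denote the greatest integer not belonging to $\Gamma_n$. Then $F(\Gamma_n)=O(n^2)$; that is, there is a constant $C>0$ such that $F(\Gamma_n)\le C n^2$ for all positive integers $n$.
   Context: For every positive integer $n$ the set $\mathbb{N}\setminus\Gamma_n$ of non-negative integers not in $\Gamma_n$ is finite (since $\gcd(n^2,(n+1)^2)=1$), so $F(\Gamma_n)$ is well defined. *)

(* Defs.v *)
From mathcomp Require Import all_boot all_order all_algebra.
Set Implicit Arguments. Unset Strict Implicit. Unset Printing Implicit Defensive.
Import Order.TTheory GRing.Theory Num.Theory.

Definition in_Gamma (n : nat) (m : int) : Prop :=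
  exists s : seq int,
    all (fun k => (n%:Z <= k)%R) s /\ m = (\sum_(k <- s) k ^+ 2)%R.

Definition is_frobenius (n : nat) (f : int) : Prop :=
  ~ in_Gamma n f /\ forall m : int, ~ in_Gamma n m -> (m <= f)%R.

(* Main.v *)
Require Import Defs.
From mathcomp Require Import all_boot all_order all_algebra zify ring.
From Stdlib Require Import Classical.
Import Order.TTheory GRing.Theory Num.Theory.
Set Warnings "-notation-overridden -ambiguous-paths".
Local Open Scope ring_scope.

Definition S4 (x : int) : Prop := exists a b c d : int,
  x = (a * a + b * b + c * c + d * d)%R.

Lemma S4_mul x y : S4 x -> S4 y -> S4 (x * y)%R.
Proof.
move=> [a [b [c [d ->]]]] [w [x' [y' [z ->]]]].
exists (a*w+b*x'+c*y'+d*z)%R, (a*x'-b*w+c*z-d*y')%R,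
       (a*y'-b*z-c*w+d*x')%R, (a*z+b*y'-c*x'-d*w)%R.
ring.
Qed.

Lemma centered (j : nat) (a : int) : exists a' k : int,
  a = (a' + (2 * j + 1)%:Z * k)%R /\ (- j%:Z <= a')%R /\ (a' <= j%:Z)%R.
Proof.
set m := (2 * j + 1)%:Z.
have mpos : (0 < m)%R by rewrite /m; lia.
have e := divz_eq a m.
case: (lerP (a %% m)%Z j%:Z) => h.
  exists (a %% m)%Z, (a %/ m)%Z; split; first by rewrite {1}e; ring.
  split; [|done]. have := modz_ge0 a (lt0r_neq0 mpos). lia.
exists ((a %% m)%Z - m)%R, ((a %/ m)%Z + 1)%R; split; first by rewrite {1}e; ring.
have := ltz_pmod a mpos. rewrite /m in h *. lia.
Qed.

Lemma halving (X a b c d : int) : (exists k, a - b = 2 * k) -> (exists l, c - d = 2 * l) ->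
  2 * X = a * a + b * b + c * c + d * d -> S4 X.
Proof.
move=> [k hk] [l hl] H.
have ea : a = b + 2 * k by rewrite -hk; ring.
have ec : c = d + 2 * l by rewrite -hl; ring.
exists (b + k), k, (d + l), l.
subst a c. lia.
Qed.

Lemma S4_even (X : int) a b c d : 2 * X = a * a + b * b + c * c + d * d -> S4 X.
Proof.
move=> H.
have two : (0 < 2 :> int) by [].
have := divz_eq a 2; have := divz_eq b 2; have := divz_eq c 2; have := divz_eq d 2.
have := modz_ge0 a (lt0r_neq0 two); have := modz_ge0 b (lt0r_neq0 two).
have := modz_ge0 c (lt0r_neq0 two); have := modz_ge0 d (lt0r_neq0 two).
have := ltz_pmod a two; have := ltz_pmod b two; have := ltz_pmod c two; have := ltz_pmod d two.
set qa := (a %/ 2)%Z; set qb := (b %/ 2)%Z; set qc := (c %/ 2)%Z; set qd := (d %/ 2)%Z.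
set ea := (a %% 2)%Z; set eb := (b %% 2)%Z; set ec := (c %% 2)%Z; set ed := (d %% 2)%Z.
move=> ? ? ? ? ? ? ? ? Ed Ec Eb Ea.
have [Ha|Ha] : ea = 0 \/ ea = 1 by lia.
all: have [Hb|Hb] : eb = 0 \/ eb = 1 by lia.
all: have [Hc|Hc] : ec = 0 \/ ec = 1 by lia.
all: have [Hd|Hd] : ed = 0 \/ ed = 1 by lia.
all: rewrite Ha Hb Hc Hd in Ea Eb Ec Ed.
all: first [
   apply: (@halving _ a b c d); [exists (qa - qb); lia| exists (qc - qd); lia | lia]
 | apply: (@halving _ a c b d); [exists (qa - qc); lia| exists (qb - qd); lia | lia]
 | apply: (@halving _ a d b c); [exists (qa - qd); lia| exists (qb - qc); lia | lia]
 | exfalso; subst a b c d; lia ].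
Qed.

Lemma S4_odd_step (p j : nat) : prime p -> (0 < j)%N -> (2 * j + 1 < p)%N ->
  S4 ((2 * j + 1)%:Z * p%:Z) -> exists r : nat, (0 < r)%N /\ (r < 2 * j + 1)%N /\ S4 (r%:Z * p%:Z).
Proof.
move=> pp j0 jp [a [b [c [d H]]]].
set m := (2 * j + 1)%:Z in H *.
have mpos : 0 < m by rewrite /m; lia.
have [a' [ka [Ea [la ua]]]] := centered j a.
have [b' [kb [Eb [lb ub]]]] := centered j b.
have [c' [kc [Ec [lc uc]]]] := centered j c.
have [d' [kd [Ed [ld ud]]]] := centered j d.
rewrite -/m in Ea Eb Ec Ed.
subst a b c d.
set r := p%:Z - 2 * ((a' + m * ka) * ka + (b' + m * kb) * kb + (c' + m * kc) * kc + (d' + m * kd) * kd)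
   + m * (ka * ka + kb * kb + kc * kc + kd * kd).
have Hr : m * r = a' * a' + b' * b' + c' * c' + d' * d' by rewrite /r; lia.
have r0 : 0 <= r by nia.
have rm : r < m by nia.
have [rz|rpos] : r = 0 \/ 0 < r by lia.
  exfalso.
  have [za [zb [zc zd]]] : a' = 0 /\ b' = 0 /\ c' = 0 /\ d' = 0 by nia.
  subst a' b' c' d'.
  have e : m * (p%:Z - m * (ka * ka + kb * kb + kc * kc + kd * kd)) = 0 by lia.
  move/eqP: e; rewrite mulf_eq0 => /orP [/eqP|/eqP] e; first lia.
  set K := ka * ka + kb * kb + kc * kc + kd * kd in e.
  have K0 : 0 <= K by rewrite /K; nia.
  have pe : (p = (2 * j + 1) * `|K|)%N by lia.
  have : (2 * j + 1 %| p)%N by rewrite pe dvdn_mulr.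
  move/(prime_nt_dvdP pp); have ne : (2 * j + 1 != 1)%N by lia.
  move=> /(_ ne) ep. lia.
exists `|r|%N; split; first lia. split; first lia.
set F1 := r + (ka * a' + kb * b' + kc * c' + kd * d').
set F2 := ka * b' - kb * a' + kc * d' - kd * c'.
set F3 := ka * c' - kb * d' - kc * a' + kd * b'.
set F4 := ka * d' + kb * c' - kc * b' - kd * a'.
exists F1, F2, F3, F4.
have mm : m * m != 0 by rewrite mulf_eq0 negb_or; apply/andP; split; lia.
apply: (mulfI mm).
have hF1 : m * F1 = a' * a' + b' * b' + c' * c' + d' * d' + m * (ka * a' + kb * b' + kc * c' + kd * d')
  by rewrite /F1 mulrDr Hr.
have -> : `|r|%:Z = r by lia.
transitivity ((m * p%:Z) * (m * r)); first ring.
rewrite H Hr.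
transitivity ((m * F1) * (m * F1) + (m * F2) * (m * F2) + (m * F3) * (m * F3) + (m * F4) * (m * F4)); last ring.
rewrite hF1 /F2 /F3 /F4. ring.
Qed.
Lemma sq_inj p x y : prime p -> (2*x < p -> 2*y < p -> x^2 %% p = y^2 %% p -> x = y)%N.
Proof.
move=> pp.
wlog le: x y / (x <= y)%N.
  move=> W hx hy e; case: (leqP x y) => h; first exact: W.
  by apply/esym; apply: W => //; apply: ltnW.
move=> hx hy e.
have : (p %| y^2 - x^2)%N.
  rewrite -eqn_mod_dvd; first by apply/eqP.
  by rewrite leq_exp2r.
rewrite subn_sqr Euclid_dvdM // => /orP [] d.
  case: (posnP (y - x)) => z; first lia.
  have := dvdn_leq z d. lia.
case: (posnP (y + x)) => z; first lia.
have := dvdn_leq z d. lia.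
Qed.

Lemma pigeon p : prime p -> odd p -> exists x y,
  (2*x < p /\ 2*y < p /\ p %| x^2 + y^2 + 1)%N.
Proof.
move=> pp op.
have p0 : (0 < p)%N by apply: prime_gt0.
apply: NNPP => H.
set h := p.+1./2.
have h2 : (h.*2 = p.+1)%N by rewrite /h; have := odd_double_half p.+1; rewrite /= op /=; lia.
have lth x : (x \in iota 0 h) -> (2 * x < p)%N.
  rewrite mem_iota add0n => hx. lia.
set s := [seq (x^2 %% p)%N | x <- iota 0 h] ++ [seq (p.-1 - y^2 %% p)%N | y <- iota 0 h].
have us : uniq s.
  rewrite cat_uniq; apply/and3P; split.
  - rewrite map_inj_in_uniq ?iota_uniq // => x y hx hy.
    exact: sq_inj pp (lth _ hx) (lth _ hy).
  - apply/hasPn => z /mapP [y hy ->]; apply/negP => /mapP [x hx e].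
    apply: H; exists x, y; split; first exact: lth.
    split; first exact: lth.
    have := ltn_pmod (y^2) p0.
    have := divn_eq (x^2) p. have := divn_eq (y^2) p.
    move=> ey ex lt.
    apply/dvdnP; exists (x^2 %/ p + y^2 %/ p + 1)%N.
    lia.
  - rewrite map_inj_in_uniq ?iota_uniq // => x y hx hy.
    have := ltn_pmod (x^2) p0. have := ltn_pmod (y^2) p0.
    move=> a b e. apply: (@sq_inj p x y pp (lth _ hx) (lth _ hy)); lia.
have sub : {subset s <= iota 0 p}.
  move=> z; rewrite mem_cat mem_iota add0n => /orP [] /mapP [x _ ->].
    exact: ltn_pmod.
  lia.
have := uniq_leq_size us sub.
rewrite size_iota size_cat !size_map size_iota.
lia.
Qed.

Lemma descent p : prime p -> forall m : nat, (0 < m)%N -> (m < p)%N ->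
  S4 (m%:Z * p%:Z) -> S4 p%:Z.
Proof.
move=> pp m; elim/ltn_ind: m => m IH m0 mp H.
case: (eqVneq m 1%N) => [e1|m1]; first by rewrite e1 mul1r in H.
have := odd_double_half m.
case om: (odd m) => /= em.
  have [r [r0 [rm Hr]]] := @S4_odd_step p m./2 pp ltac:(lia) ltac:(lia)
     ltac:(by have -> : (2 * m./2 + 1)%:Z = m%:Z by lia).
  apply: (IH r) => //; lia.
apply: (IH m./2); [lia|lia|lia|].
case: H => [a [b [c [d H]]]].
apply: (@S4_even _ a b c d).
rewrite -H. have -> : m%:Z = 2 * (m./2)%:Z by lia. ring.
Qed.

Lemma sqr_pred_aux p : (0 < p)%N -> ((p - 1) * (p - 1) + 2 * p = p * p + 1)%N.
Proof. by case: p => // p _; rewrite subn1 /= mulSn mulnS; lia. Qed.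

Lemma S4_prime p : prime p -> S4 p%:Z.
Proof.
move=> pp.
have [->|op] := even_prime pp.
  by exists 1, 1, 0, 0.
have [x [y [hx [hy dv]]]] := @pigeon p pp op.
have p0 : (0 < p)%N by apply: prime_gt0.
have e := divnK dv.
set m := ((x ^ 2 + y ^ 2 + 1) %/ p)%N in e.
apply: (@descent p pp m).
- rewrite lt0n; apply/eqP => m0; move: e; rewrite m0 mul0n; lia.
- have p2 := prime_gt1 pp.
  have h1 : (2 * x * (2 * x) <= (p - 1) * (p - 1))%N by apply: leq_mul; lia.
  have h2 : (2 * y * (2 * y) <= (p - 1) * (p - 1))%N by apply: leq_mul; lia.
  have h4 : ((p - 1) * (p - 1) + 2 * p = p * p + 1)%N.
    by apply: sqr_pred_aux; lia.
  rewrite ltnNge; apply/negP => pm.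
  have h3 : (p * p <= m * p)%N by apply: leq_mul.
  move: e; rewrite !expnS !expn0 !muln1. lia.
- exists x%:Z, y%:Z, 1, 0. rewrite -PoszM e. lia.
Qed.

Theorem lagrange (N : nat) : S4 N%:Z.
Proof.
elim/ltn_ind: N => N IH.
case: (ltnP 1 N) => N1; last first.
  case: N N1 IH => [|[|]] // _ _; [by exists 0,0,0,0 | by exists 1,0,0,0].
have pp := pdiv_prime N1.
have dv := pdiv_dvd N.
have e := divnK dv.
rewrite -e PoszM mulrC.
apply: S4_mul; first exact: (S4_prime (pdiv N) pp).
apply: IH. rewrite ltn_Pdiv //; [exact: prime_gt1 | lia].
Qed.
Lemma G0 n : in_Gamma n 0.
Proof. by exists [::]; rewrite big_nil. Qed.

Lemma GD n x y : in_Gamma n x -> in_Gamma n y -> in_Gamma n (x + y).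
Proof.
move=> [s [hs ->]] [t [ht ->]]; exists (s ++ t); split.
  by rewrite all_cat hs ht.
by rewrite big_cat.
Qed.

Lemma GS n k : n%:Z <= k -> in_Gamma n (k * k).
Proof.
move=> h; exists [:: k]; split; first by rewrite /= h.
by rewrite big_seq1 expr2.
Qed.

Lemma Gmul n (q : nat) : in_Gamma n (q%:Z * (n%:Z * n%:Z)).
Proof.
elim: q => [|q IH]; first by rewrite mul0r; apply: G0.
have -> : q.+1%:Z * (n%:Z * n%:Z) = q%:Z * (n%:Z * n%:Z) + n%:Z * n%:Z by lia.
by apply: GD => //; apply: GS.
Qed.

Lemma big_in n (m : int) : (0 < n)%N -> 36 * (n%:Z * n%:Z) <= m -> in_Gamma n m.
Proof.
move=> n0 hm.
set N := n%:Z in hm *.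
have Npos : 0 < N by rewrite /N; lia.
have two : (0 < 2 :> int) by [].
set w0 := m - 33 * (N * N).
have := divz_eq w0 2; have := modz_ge0 w0 (lt0r_neq0 two); have := ltz_pmod w0 two.
set q2 := (w0 %/ 2)%Z; set b := (w0 %% 2)%Z.
move=> b1 b0 ew.
have NN : N <= N * N by nia.
have [e [u [He [u0 Hm]]]] : exists e u, in_Gamma n e /\ 0 <= u /\ m = e + 2 * u + 32 * (N * N).
  have [bz|bo] : b = 0 \/ b = 1 by lia.
  - exists (N * N), q2. split; first by apply: GS; lia.
    split; rewrite /w0 in ew; lia.
  - exists ((N + 1) * (N + 1)), (q2 - N). split; first by apply: GS; lia.
    split; rewrite /w0 in ew; lia.
have NN0 : N * N != 0 by rewrite mulf_eq0 negb_or; apply/andP; split; lia.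
have NNpos : 0 < N * N by lia.
have := divz_eq u (N * N); have := modz_ge0 u NN0; have := ltz_pmod u NNpos.
have := divz_ge0 u NNpos. rewrite u0.
set Q := (u %/ (N * N))%Z; set r := (u %% (N * N))%Z.
move=> Q0 r1 r0 eu.
have [a [b' [c [d Hr]]]] := lagrange `|r|%N.
have ea : `|r|%:Z = r by lia.
rewrite ea in Hr.
have P x : x * x <= r -> in_Gamma n ((2 * N + x) * (2 * N + x) + (2 * N - x) * (2 * N - x)).
  move=> hx.
  have : - N < x < N by apply/andP; split; nia.
  move=> /andP [l1 l2].
  by apply: GD; apply: GS; lia.
have -> : m = e + ((2 * `|Q|)%N%:Z * (N * N)) +
  (((2 * N + a) * (2 * N + a) + (2 * N - a) * (2 * N - a)) +
   ((2 * N + b') * (2 * N + b') + (2 * N - b') * (2 * N - b')) +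
   ((2 * N + c) * (2 * N + c) + (2 * N - c) * (2 * N - c)) +
   ((2 * N + d) * (2 * N + d) + (2 * N - d) * (2 * N - d))).
  have -> : (2 * `|Q|)%N%:Z = 2 * Q by lia.
  lia.
apply: GD; first by apply: GD => //; apply: Gmul.
by apply: GD; [apply: GD; [apply: GD|]|]; apply: P; nia.
Qed.

Lemma G_ge0 n m : in_Gamma n m -> 0 <= m.
Proof. move=> [s [_ ->]]; apply: sumr_ge0 => k _; exact: sqr_ge0. Qed.

Lemma frob_exists n (N : nat) : (forall m : int, N%:Z <= m -> in_Gamma n m) ->
  exists f, is_frobenius n f /\ f < N%:Z.
Proof.
elim: N => [|N IH] H.
  exists (-1); split; last by [].
  split; first by move/G_ge0.
  move=> m nm; case: (ltrP m 0) => h; first lia.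
  by exfalso; apply: nm; apply: H.
case: (classic (in_Gamma n N%:Z)) => g.
  have [f [hf lt]] : exists f, is_frobenius n f /\ f < N%:Z.
    apply: IH => m hm.
    have [e|lt] : m = N%:Z \/ N.+1%:Z <= m by lia.
      by rewrite e.
    exact: H.
  by exists f; split => //; lia.
exists N%:Z; split; last by lia.
split => // m nm.
case: (lerP m N%:Z) => // h.
by exfalso; apply: nm; apply: H; lia.
Qed.

Theorem theorem1 :
  exists C : int, (0 < C)%R /\
    forall n : nat, (0 < n)%N ->
      exists f : int, is_frobenius n f /\ (f <= C * (n%:Z) ^+ 2)%R.
Proof.
exists 36; split => // n n0.
have [f [hf lt]] := @frob_exists n (36 * n * n)%N
  (fun m hm => @big_in n m n0 (ltac:(lia) : 36 * (n%:Z * n%:Z) <= m)).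
exists f; split => //.
rewrite expr2. lia.
Qed.
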